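(* For $k=1,\dots,s-1$, assume the following quantity is defined (denominator nonzero): $$r_k:=\frac{\alpha_k-\beta_k}{h_{k+1}\beta_k-h_{k-1}\alpha_k}.$$ Set $r_0:=P_{\max}$ and $r_s:=0$, and suppose $$0=r_s<r_{s-1}<\cdots<r_1<r_0=P_{\max}.$$ Then the KKT system described in the context has a unique solution. In that solution $I_k=r_k$ for all $k\in\{1,\dots,s-1\}$ and $\lambda_k=0$ for all $k$. Moreover, the optimal power allocation of problem (P) is $I^{**}_k=r_k$ for all $k\in\{1,\dots,s-1\}$.
   Context: Parameters: - $s\ge 2$, $P_{\max}>0$, and positive reals $h_0<h_1<\cdots<h_s$. - Probabilities $\delta_0,\dots,\delta_s$ summing to $1$. - $\theta_k:=\sum_{j=0}^{k-1}\delta_j$ and $\Delta_k:=\theta_k(1-\theta_k)$ for $k=1,\dots,s$. - $\alpha_k:=(h_{k+1}-h_k)\Delta_{k+1}$ and $\beta_k:=(h_k-h_{k-1})\Delta_k$ for $k=1,\dots,s-1$. Problem (P). The variables are $I_1,\dots,I_{s-1}$, with the conventions $I_0:=P_{\max}$ and $I_s:=0$. Maximize $$f(I)=\sum_{i=1}^s\Delta_i\,\frac L2\log\Big(\frac{1+h_iI_{i-1}}{1+h_iI_i}\cdot\frac{1+h_{i-1}I_i}{1+h_{i-1}I_{i-1}}\Big)$$ subject to $I_k\le I_{k-1}$ for all $k=1,\dots,s$. This is the power-allocation problem with $I_k=\sum_{j>k}P_j$. KKT system. Define the Lagrangian $$\mathcal L(I,\lambda)=-f(I)+\sum_{i=1}^s\lambda_i(I_i-I_{i-1}).$$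 The system asks for $(I_1,\dots,I_{s-1},\lambda_1,\dots,\lambda_s)$ such that: - $\partial\mathcal L/\partial I_k=0$ for $k=1,\dots,s-1$, - $\lambda_k(I_k-I_{k-1})=0$, $I_k\le I_{k-1}$ and $\lambda_k\ge0$ for $k=1,\dots,s$. *)

(* Defs.v *)
From Stdlib Require Import Reals Lra Lia.
Open Scope R_scope.

Fixpoint rsum (g : nat -> R) (n : nat) : R :=
  match n with O => 0 | S m => rsum g m + g m end.

Definition theta (delta : nat -> R) (k : nat) : R := rsum delta k.
Definition Delta (delta : nat -> R) (k : nat) : R :=
  theta delta k * (1 - theta delta k).

Definition alpha (h delta : nat -> R) (k : nat) : R :=
  (h (S k) - h k) * Delta delta (S k).
Definition beta (h delta : nat -> R) (k : nat) : R :=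
  (h k - h (pred k)) * Delta delta k.

Definition rk (h delta : nat -> R) (k : nat) : R :=
  (alpha h delta k - beta h delta k) /
  (h (S k) * beta h delta k - h (pred k) * alpha h delta k).

Definition Iext (s : nat) (Pmax : R) (I : nat -> R) (k : nat) : R :=
  if Nat.eqb k 0 then Pmax else if Nat.eqb k s then 0 else I k.

Definition fobj (s : nat) (Pmax L : R) (h delta : nat -> R) (I : nat -> R) : R :=
  rsum (fun j =>
    let i := S j in
    Delta delta i * (L / 2) *
      ln ((1 + h i * Iext s Pmax I (pred i)) / (1 + h i * Iext s Pmax I i) *
          ((1 + h (pred i) * Iext s Pmax I i) /
           (1 + h (pred i) * Iext s Pmax I (pred i))))) s.

Definition Lagr (s : nat) (Pmax L : R) (h delta : nat -> R)
  (I lam : nat -> R) : R :=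
  - fobj s Pmax L h delta I +
  rsum (fun j => lam (S j) * (Iext s Pmax I (S j) - Iext s Pmax I j)) s.

Definition upd (I : nat -> R) (k : nat) (x : R) : nat -> R :=
  fun j => if Nat.eqb j k then x else I j.

Definition feasible (s : nat) (Pmax : R) (I : nat -> R) : Prop :=
  forall k, (1 <= k <= s)%nat -> Iext s Pmax I k <= Iext s Pmax I (pred k).

Definition KKT (s : nat) (Pmax L : R) (h delta : nat -> R)
  (I lam : nat -> R) : Prop :=
  (forall k, (1 <= k <= s - 1)%nat ->
     derivable_pt_lim (fun x => Lagr s Pmax L h delta (upd I k x) lam) (I k) 0)
  /\ (forall k, (1 <= k <= s)%nat ->
        lam k * (Iext s Pmax I k - Iext s Pmax I (pred k)) = 0
        /\ Iext s Pmax I k <= Iext s Pmax I (pred k)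
        /\ 0 <= lam k).

(* Main.v *)
Require Import Defs.
From Stdlib Require Import Reals Lra Lia.
Open Scope R_scope.

Lemma rsum_ext (f g : nat -> R) n :
  (forall j, (j < n)%nat -> f j = g j) -> rsum f n = rsum g n.
Proof.
  induction n; intros H; simpl; [reflexivity|].
  rewrite IHn by (intros; apply H; lia). rewrite H by lia. reflexivity.
Qed.

Lemma rsum_le (f g : nat -> R) n :
  (forall j, (j < n)%nat -> f j <= g j) -> rsum f n <= rsum g n.
Proof.
  induction n; intros H; simpl; [lra|].
  assert (rsum f n <= rsum g n) by (apply IHn; intros; apply H; lia).
  assert (f n <= g n) by (apply H; lia). lra.
Qed.

Lemma rsum_minus (f g : nat -> R) n :
  rsum (fun j => f j - g j) n = rsum f n - rsum g n.
Proof. induction n; simpl; [ring| rewrite IHn; ring]. Qed.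

Lemma rsum_nonneg (d : nat -> R) n :
  (forall j, (j < n)%nat -> 0 <= d j) -> 0 <= rsum d n.
Proof.
  induction n; intros H; simpl; [lra|].
  assert (0 <= rsum d n) by (apply IHn; intros; apply H; lia).
  assert (0 <= d n) by (apply H; lia). lra.
Qed.

Lemma rsum_nonneg_mono (d : nat -> R) n m :
  (forall j, (j < n)%nat -> 0 <= d j) -> (m <= n)%nat ->
  0 <= rsum d m <= rsum d n.
Proof.
  intros H Hm. induction n.
  - assert (m = 0)%nat by lia. subst. simpl. lra.
  - destruct (Nat.eq_dec m (S n)).
    + subst. split; [|lra]. apply rsum_nonneg; auto.
    + assert (0 <= rsum d m <= rsum d n) by (apply IHn; [intros; apply H; lia| lia]).
      simpl. assert (0 <= d n) by (apply H; lia). lra.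
Qed.

Lemma sbp (A : nat -> R -> R) (X : nat -> R) p :
  rsum (fun j => A j (X j) - A j (X (S j))) (S p) =
  A 0%nat (X 0%nat) + rsum (fun j => A (S j) (X (S j)) - A j (X (S j))) p - A p (X (S p)).
Proof.
  induction p.
  - simpl. ring.
  - change (rsum (fun j => A j (X j) - A j (X (S j))) (S (S p))) with
      (rsum (fun j => A j (X j) - A j (X (S j))) (S p) + (A (S p) (X (S p)) - A (S p) (X (S (S p))))).
    rewrite IHp. simpl. ring.
Qed.

Lemma rsum_upd (F : nat -> R -> R) (Y : nat -> R) n k x :
  (k < n)%nat ->
  rsum (fun j => F j (if Nat.eqb j k then x else Y j)) n =
  rsum (fun j => F j (Y j)) n - F k (Y k) + F k x.
Proof.
  induction n; intros Hk; [lia|].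
  simpl. destruct (Nat.eq_dec k n).
  - subst. rewrite Nat.eqb_refl.
    rewrite (rsum_ext _ (fun j => F j (Y j))). ring.
    intros j Hj. destruct (Nat.eqb_spec j n); [lia| reflexivity].
  - rewrite IHn by lia. destruct (Nat.eqb_spec n k); [lia|]. ring.
Qed.

Lemma dlt_loc (f g : R -> R) x0 l (d : R) :
  0 < d -> (forall x, Rabs (x - x0) < d -> f x = g x) ->
  derivable_pt_lim g x0 l -> derivable_pt_lim f x0 l.
Proof.
  intros Hd Heq Hg eps Heps. destruct (Hg eps Heps) as [e He].
  assert (Hm : 0 < Rmin e d) by (apply Rmin_pos; [apply cond_pos| lra]).
  exists (mkposreal _ Hm). intros hh Hh0 Hh. simpl in Hh.
  assert (Hmr := Rmin_r e d). assert (Hml := Rmin_l e d).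
  rewrite (Heq (x0 + hh)) by (replace (x0 + hh - x0) with hh by ring; lra).
  rewrite (Heq x0) by (replace (x0 - x0) with 0 by ring; rewrite Rabs_R0; lra).
  apply He; auto. lra.
Qed.

Lemma dln (c x : R) : 0 < 1 + c * x ->
  derivable_pt_lim (fun y => ln (1 + c * y)) x (c / (1 + c * x)).
Proof.
  intros H.
  assert (H1 : derivable_pt_lim (fun y => 1 + c * y) x c).
  { assert (H0 : derivable_pt_lim (fct_cte 1 + mult_real_fct c id)%F x (0 + c * 1)).
    { apply derivable_pt_lim_plus. apply derivable_pt_lim_const.
      apply derivable_pt_lim_scal, derivable_pt_lim_id. }
    replace (0 + c * 1) with c in H0 by ring. exact H0. }
  assert (H2 := derivable_pt_lim_comp _ ln x c (/ (1 + c * x)) H1 (derivable_pt_lim_ln _ H)).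
  unfold comp in H2. replace (c / (1 + c * x)) with (/ (1 + c * x) * c) by (field; lra).
  exact H2.
Qed.

Definition wgt (delta : nat -> R) (L : R) j := Defs.Delta delta (S j) * (L / 2).
Definition aF (h delta : nat -> R) (L : R) j y :=
  wgt delta L j * (ln (1 + h (S j) * y) - ln (1 + h j * y)).
Definition GF h delta L m y := aF h delta L m y - aF h delta L (pred m) y.
Definition Dk (h delta : nat -> R) k :=
  h (S k) * beta h delta k - h (pred k) * alpha h delta k.
Definition Gd h delta L k x :=
  (L / 2) * Dk h delta k * (rk h delta k - x) /
  ((1 + h (pred k) * x) * (1 + h k * x) * (1 + h (S k) * x)).
Definition AL (lam : nat -> R) j y := - lam (S j) * y.

Lemma ln4 A B C E : 0 < A -> 0 < B -> 0 < C -> 0 < E ->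
  ln (A / B * (C / E)) = ln A - ln B + ln C - ln E.
Proof.
  intros. unfold Rdiv.
  assert (0 < / B) by (apply Rinv_0_lt_compat; auto).
  assert (0 < / E) by (apply Rinv_0_lt_compat; auto).
  rewrite ln_mult, ln_mult, ln_mult, ln_Rinv, ln_Rinv; try ring; auto;
  apply Rmult_lt_0_compat; auto.
Qed.

Lemma Iext0 s Pmax I : Iext s Pmax I 0 = Pmax.
Proof. reflexivity. Qed.
Lemma Iexts s Pmax I : (1 <= s)%nat -> Iext s Pmax I s = 0.
Proof. intros. unfold Iext. destruct (Nat.eqb_spec s 0); [lia|]. now rewrite Nat.eqb_refl. Qed.
Lemma Iextk s Pmax I k : (1 <= k <= s - 1)%nat -> Iext s Pmax I k = I k.
Proof. intros. unfold Iext. destruct (Nat.eqb_spec k 0); [lia|].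
  destruct (Nat.eqb_spec k s); [lia|]. reflexivity. Qed.

Lemma Iext_upd s Pmax I k x m : (1 <= k <= s - 1)%nat ->
  Iext s Pmax (upd I k x) m = if Nat.eqb m k then x else Iext s Pmax I m.
Proof.
  intros. unfold Iext, upd.
  destruct (Nat.eqb_spec m 0); destruct (Nat.eqb_spec m s); destruct (Nat.eqb_spec m k);
  try lia; reflexivity.
Qed.

Lemma fobj_dec s Pmax L h delta I : (1 <= s)%nat ->
  (forall j m, (j <= s)%nat -> (m <= s)%nat -> 0 < 1 + h j * Iext s Pmax I m) ->
  fobj s Pmax L h delta I = aF h delta L 0 Pmax +
    rsum (fun j => GF h delta L (S j) (Iext s Pmax I (S j))) (s - 1)
    - aF h delta L (s - 1) 0.
Proof.
  intros Hs Hp. unfold fobj.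
  rewrite (rsum_ext _ (fun j => aF h delta L j (Iext s Pmax I j) - aF h delta L j (Iext s Pmax I (S j)))).
  - destruct s as [|p]; [lia|]. replace (S p - 1)%nat with p by lia.
    rewrite sbp. rewrite Iext0, Iexts by lia. reflexivity.
  - intros j Hj. cbv zeta. change (pred (S j)) with j. unfold aF.
    rewrite ln4 by (apply Hp; lia). unfold wgt. ring.
Qed.

Lemma lsum_dec s Pmax I (lam : nat -> R) : (1 <= s)%nat ->
  rsum (fun j => lam (S j) * (Iext s Pmax I (S j) - Iext s Pmax I j)) s =
  AL lam 0 Pmax + rsum (fun j => AL lam (S j) (Iext s Pmax I (S j)) - AL lam j (Iext s Pmax I (S j))) (s - 1)
  - AL lam (s - 1) 0.
Proof.
  intros Hs.
  rewrite (rsum_ext _ (fun j => AL lam j (Iext s Pmax I j) - AL lam j (Iext s Pmax I (S j)))).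
  - destruct s as [|p]; [lia|]. replace (S p - 1)%nat with p by lia.
    rewrite sbp. rewrite Iext0, Iexts by lia. reflexivity.
  - intros j Hj. unfold AL. ring.
Qed.

Lemma da h delta L j y : 0 < 1 + h (S j) * y -> 0 < 1 + h j * y ->
  derivable_pt_lim (aF h delta L j) y
    (wgt delta L j * (h (S j) / (1 + h (S j) * y) - h j / (1 + h j * y))).
Proof.
  intros H1 H2.
  apply (derivable_pt_lim_scal (fun y => ln (1 + h (S j) * y) - ln (1 + h j * y))).
  apply (derivable_pt_lim_minus (fun y => ln (1 + h (S j) * y)) (fun y => ln (1 + h j * y))).
  apply dln; auto. apply dln; auto.
Qed.

Lemma G_deriv h delta L k x :
  Dk h delta (S k) <> 0 ->
  0 < 1 + h k * x -> 0 < 1 + h (S k) * x -> 0 < 1 + h (S (S k)) * x ->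
  derivable_pt_lim (GF h delta L (S k)) x (Gd h delta L (S k) x).
Proof.
  intros HD H0 H1 H2.
  assert (Hd := derivable_pt_lim_minus _ _ x _ _ (da h delta L (S k) x H2 H1) (da h delta L k x H1 H0)).
  match type of Hd with derivable_pt_lim _ _ ?l => replace (Gd h delta L (S k) x) with l end.
  exact Hd.
  unfold Gd, rk, wgt. change (pred (S k)) with k. unfold Dk in *. change (pred (S k)) with k in HD.
  unfold alpha, beta in *. change (pred (S k)) with k in *.
  field. repeat split; lra.
Qed.

Lemma Lagr_upd s Pmax L h delta I lam k :
  (1 <= S k <= s - 1)%nat ->
  (forall j m, (j <= s)%nat -> (m <= s)%nat -> 0 < 1 + h j * Iext s Pmax I m) ->
  exists K, forall x, (forall j, (j <= s)%nat -> 0 < 1 + h j * x) ->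
    Lagr s Pmax L h delta (upd I (S k) x) lam =
    K + (- GF h delta L (S k) x + (lam (S k) - lam (S (S k))) * x).
Proof.
  intros Hk Hp.
  set (X := Iext s Pmax I).
  exists (-(aF h delta L 0 Pmax + (rsum (fun j => GF h delta L (S j) (X (S j))) (s - 1)
          - GF h delta L (S k) (X (S k))) - aF h delta L (s - 1) 0)
    + (AL lam 0 Pmax + (rsum (fun j => AL lam (S j) (X (S j)) - AL lam j (X (S j))) (s - 1)
          - (AL lam (S k) (X (S k)) - AL lam k (X (S k)))) - AL lam (s - 1) 0)).
  intros x Hx. unfold Lagr.
  assert (Hp' : forall j m, (j <= s)%nat -> (m <= s)%nat -> 0 < 1 + h j * Iext s Pmax (upd I (S k) x) m).
  { intros j m Hj Hm. rewrite Iext_upd by lia.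
    destruct (Nat.eqb m (S k)). apply Hx; lia. apply Hp; lia. }
  rewrite (fobj_dec s Pmax L h delta (upd I (S k) x) ltac:(lia) Hp').
  rewrite lsum_dec by lia.
  rewrite (rsum_ext (fun j => GF h delta L (S j) (Iext s Pmax (upd I (S k) x) (S j)))
     (fun j => GF h delta L (S j) (if Nat.eqb j k then x else X (S j))))
    by (intros j Hj; rewrite Iext_upd by lia; reflexivity).
  rewrite (rsum_ext (fun j => AL lam (S j) (Iext s Pmax (upd I (S k) x) (S j)) -
                                AL lam j (Iext s Pmax (upd I (S k) x) (S j)))
     (fun j => (fun j y => AL lam (S j) y - AL lam j y) j (if Nat.eqb j k then x else X (S j))))
    by (intros j Hj; rewrite Iext_upd by lia; reflexivity).
  rewrite (rsum_upd (fun j => GF h delta L (S j)) (fun j => X (S j))) by lia.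
  rewrite (rsum_upd (fun j y => AL lam (S j) y - AL lam j y) (fun j => X (S j))) by lia.
  cbv beta. unfold AL. ring.
Qed.

Lemma chain (X : nat -> R) s : (forall k, (k < s)%nat -> X (S k) <= X k) ->
  forall i j, (i <= j <= s)%nat -> X j <= X i.
Proof.
  intros H i j. induction j; intros Hij.
  - assert (i = 0)%nat by lia. subst. lra.
  - destruct (Nat.eq_dec i (S j)). subst; lra.
    assert (X j <= X i) by (apply IHj; lia). assert (X (S j) <= X j) by (apply H; lia). lra.
Qed.

Lemma Gd_form h delta L k y :
  Dk h delta k <> 0 ->
  0 < 1 + h (pred k) * y -> 0 < 1 + h k * y -> 0 < 1 + h (S k) * y ->
  Gd h delta L k y = ((L / 2) * Dk h delta k /
    ((1 + h (pred k) * y) * (1 + h k * y) * (1 + h (S k) * y))) * (rk h delta k - y).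
Proof. intros. unfold Gd. field. repeat split; lra. Qed.

Lemma G_max h delta L k y :
  0 < L -> 0 < Dk h delta (S k) ->
  (forall j, (j <= S (S k))%nat -> 0 < h j) -> 0 < rk h delta (S k) -> 0 <= y ->
  GF h delta L (S k) y <= GF h delta L (S k) (rk h delta (S k)).
Proof.
  intros HL HD Hh Hr Hy.
  assert (Hpos : forall c j, 0 <= c -> (j <= S (S k))%nat -> 0 < 1 + h j * c).
  { intros c j Hc Hj. assert (0 < h j) by (apply Hh; lia). nra. }
  assert (Hder : forall c, 0 <= c -> derivable_pt_lim (GF h delta L (S k)) c (Gd h delta L (S k) c)).
  { intros c Hc. apply G_deriv; [lra| | | ]; apply Hpos; (lra || (simpl; lia)). }
  assert (Hsg : forall c, 0 <= c -> exists cc, 0 < cc /\ Gd h delta L (S k) c = cc * (rk h delta (S k) - c)).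
  { intros c Hc. eexists; split; [|apply Gd_form; try lra; apply Hpos; (lra || (simpl; lia))].
    assert (0 < 1 + h (pred (S k)) * c) by (apply Hpos; (lra || (simpl; lia))).
    assert (0 < 1 + h (S k) * c) by (apply Hpos; (lra || (simpl; lia))).
    assert (0 < 1 + h (S (S k)) * c) by (apply Hpos; (lra || (simpl; lia))).
    apply Rdiv_lt_0_compat. nra. apply Rmult_lt_0_compat; [apply Rmult_lt_0_compat|]; auto. }
  set (r := rk h delta (S k)) in *.
  destruct (Rtotal_order y r) as [Hlt|[Heq|Hgt]].
  - destruct (MVT_cor2 (GF h delta L (S k)) (Gd h delta L (S k)) y r Hlt) as [c [Hc1 Hc2]].
    intros c Hc. apply Hder. lra.
    destruct (Hsg c) as [cc [Hcc Hcc']]. lra. rewrite Hcc' in Hc1.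
    assert (0 < cc * ((r - c) * (r - y))) by (apply Rmult_lt_0_compat; [lra| apply Rmult_lt_0_compat; lra]). nra.
  - subst. lra.
  - destruct (MVT_cor2 (GF h delta L (S k)) (Gd h delta L (S k)) r y Hgt) as [c [Hc1 Hc2]].
    intros c Hc. apply Hder. lra.
    destruct (Hsg c) as [cc [Hcc Hcc']]. lra. rewrite Hcc' in Hc1.
    assert (0 < cc * ((c - r) * (y - r))) by (apply Rmult_lt_0_compat; [lra| apply Rmult_lt_0_compat; lra]). nra.
Qed.

Lemma Lagr_deriv s Pmax L h delta I lam k :
  (1 <= k <= s - 1)%nat -> Dk h delta k <> 0 ->
  (forall j, (j <= s)%nat -> 0 < h j) -> (forall j, (j <= s)%nat -> h j <= h s) ->
  (forall m, (m <= s)%nat -> 0 <= Iext s Pmax I m) ->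
  derivable_pt_lim (fun x => Lagr s Pmax L h delta (upd I k x) lam) (I k)
    (- Gd h delta L k (I k) + (lam k - lam (S k))).
Proof.
  intros Hk HD Hh Hhs HX.
  destruct k as [|k']; [lia|].
  assert (Hp : forall j m, (j <= s)%nat -> (m <= s)%nat -> 0 < 1 + h j * Iext s Pmax I m).
  { intros j m Hj Hm. assert (0 < h j) by auto. assert (0 <= Iext s Pmax I m) by auto. nra. }
  destruct (Lagr_upd s Pmax L h delta I lam k' Hk Hp) as [K HK].
  assert (Hs0 : 0 < h s) by (apply Hh; lia).
  assert (HIk : 0 <= I (S k')) by (rewrite <- (Iextk s Pmax I) by lia; apply HX; lia).
  set (c := lam (S k') - lam (S (S k'))).
  apply (dlt_loc _ (fun x => K + (- GF h delta L (S k') x + c * x)) _ _ (/ (2 * h s))).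
  - apply Rinv_0_lt_compat. lra.
  - intros x Hx. apply HK. intros j Hj.
    assert (0 < h j) by auto. assert (h j <= h s) by auto.
    assert (Hinv : h s * / (2 * h s) = / 2) by (field; lra).
    apply Rabs_def2 in Hx. destruct Hx as [Hx1 Hx2].
    destruct (Rle_or_lt 0 x). nra.
    assert (h s * x > - / 2) by nra. nra.
  - assert (H0 : derivable_pt_lim (fct_cte K + (- GF h delta L (S k') + mult_real_fct c id))%F (I (S k'))
       (0 + (- Gd h delta L (S k') (I (S k')) + c * 1))).
    { apply derivable_pt_lim_plus. apply derivable_pt_lim_const.
      apply derivable_pt_lim_plus. apply derivable_pt_lim_opp. apply G_deriv; auto.
      all: try (assert (0 < h k') by (apply Hh; lia); nra).
      assert (0 < h (S k')) by (apply Hh; lia); nra.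
      assert (0 < h (S (S k'))) by (apply Hh; lia); nra.
      apply derivable_pt_lim_scal, derivable_pt_lim_id. }
    replace (- Gd h delta L (S k') (I (S k')) + c) with
      (0 + (- Gd h delta L (S k') (I (S k')) + c * 1)) by ring.
    exact H0.
Qed.

Theorem lemma1 (s : nat) (Pmax L : R) (h delta : nat -> R) :
  (2 <= s)%nat -> 0 < Pmax -> 0 < L ->
  0 < h 0%nat -> (forall k, (k < s)%nat -> h k < h (S k)) ->
  (forall j, (j <= s)%nat -> 0 <= delta j) ->
  rsum delta (S s) = 1 ->
  (forall k, (1 <= k <= s - 1)%nat ->
     h (S k) * beta h delta k - h (pred k) * alpha h delta k <> 0) ->
  (forall k, (k < s)%nat ->
     Iext s Pmax (rk h delta) (S k) < Iext s Pmax (rk h delta) k) ->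
  KKT s Pmax L h delta (rk h delta) (fun _ => 0)
  /\ (forall I lam, KKT s Pmax L h delta I lam ->
        (forall k, (1 <= k <= s - 1)%nat -> I k = rk h delta k)
        /\ (forall k, (1 <= k <= s)%nat -> lam k = 0))
  /\ feasible s Pmax (rk h delta)
  /\ (forall I, feasible s Pmax I ->
        fobj s Pmax L h delta I <= fobj s Pmax L h delta (rk h delta)).
Proof.
  intros Hs HP HL Hh0 Hinc Hdel Hsum HDnz Hr.
  assert (Hh : forall j, (j <= s)%nat -> 0 < h j).
  { induction j; intros Hj; auto. assert (h j < h (S j)) by (apply Hinc; lia).
    assert (0 < h j) by (apply IHj; lia). lra. }
  assert (Hhs : forall j, (j <= s)%nat -> h j <= h s).
  { assert (forall d j, (j + d = s)%nat -> h j <= h s).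
    { induction d; intros j Hj. replace j with s by lia. lra.
      assert (h (S j) <= h s) by (apply IHd; lia). assert (h j < h (S j)) by (apply Hinc; lia). lra. }
    intros j Hj. apply (H (s - j)%nat). lia. }
  assert (HDel : forall k, (k <= S s)%nat -> 0 <= Defs.Delta delta k).
  { intros k Hk. unfold Defs.Delta, theta.
    assert (0 <= rsum delta k <= rsum delta (S s)) by
      (apply rsum_nonneg_mono; [intros; apply Hdel; lia| lia]). nra. }
  set (Xr := Iext s Pmax (rk h delta)).
  assert (Hrch : forall i j, (i <= j <= s)%nat -> Xr j <= Xr i).
  { apply chain. intros. apply Rlt_le. apply Hr; auto. }
  assert (Hrpos : forall k, (1 <= k <= s - 1)%nat -> 0 < rk h delta k < Pmax).
  { intros k Hk. rewrite <- (Iextk s Pmax (rk h delta) k Hk). fold Xr.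
    assert (Xr s = 0) by (apply Iexts; lia). assert (Xr 0%nat = Pmax) by reflexivity.
    assert (Xr (S k) < Xr k) by (apply Hr; lia). assert (Xr s <= Xr (S k)) by (apply Hrch; lia).
    assert (Xr 1%nat < Xr 0%nat) by (apply Hr; lia). assert (Xr k <= Xr 1%nat) by (apply Hrch; lia).
    lra. }
  assert (HD : forall k, (1 <= k <= s - 1)%nat -> 0 < Dk h delta k).
  { intros k Hk. destruct k as [|k']; [lia|].
    assert (Hnz := HDnz (S k') Hk). fold (Dk h delta (S k')) in Hnz.
    assert (Hrk := Hrpos (S k') Hk).
    assert (Ha : 0 <= alpha h delta (S k')).
    { unfold alpha. assert (h (S k') < h (S (S k'))) by (apply Hinc; lia).
      assert (0 <= Defs.Delta delta (S (S k'))) by (apply HDel; lia). nra. }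
    assert (Hab : alpha h delta (S k') - beta h delta (S k') = rk h delta (S k') * Dk h delta (S k')).
    { unfold rk. fold (Dk h delta (S k')). field. auto. }
    assert (h k' < h (S k')) by (apply Hinc; lia). assert (h (S k') < h (S (S k'))) by (apply Hinc; lia).
    assert (0 < h k') by (apply Hh; lia).
    destruct (Rtotal_order (Dk h delta (S k')) 0) as [Hneg|[Hz|Hpo]]; [|tauto|auto].
    exfalso. assert (Hm : rk h delta (S k') * Dk h delta (S k') < 0) by nra.
    unfold Dk in Hneg. change (pred (S k')) with k' in Hneg. nra. }
  assert (Hpos : forall j y, (j <= s)%nat -> 0 <= y -> 0 < 1 + h j * y).
  { intros j y Hj Hy. assert (0 < h j) by auto. nra. }
  assert (Hder : forall I lam k, (1 <= k <= s - 1)%nat ->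
     (forall m, (m <= s)%nat -> 0 <= Iext s Pmax I m) ->
     derivable_pt_lim (fun x => Lagr s Pmax L h delta (upd I k x) lam) (I k)
       (- Gd h delta L k (I k) + (lam k - lam (S k)))).
  { intros I lam k Hk HX. apply Lagr_deriv; auto. specialize (HD k Hk). lra. }
  assert (Hsg : forall k y, (1 <= k <= s - 1)%nat -> 0 <= y ->
     exists cc, 0 < cc /\ Gd h delta L k y = cc * (rk h delta k - y)).
  { intros k y Hk Hy. specialize (HD k Hk).
    assert (0 < 1 + h (pred k) * y) by (apply Hpos; [lia|lra]).
    assert (0 < 1 + h k * y) by (apply Hpos; [lia|lra]).
    assert (0 < 1 + h (S k) * y) by (apply Hpos; [lia|lra]).
    eexists; split; [|apply Gd_form; auto; lra].
    apply Rdiv_lt_0_compat. nra. apply Rmult_lt_0_compat; [apply Rmult_lt_0_compat|]; auto. }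
  assert (Hfeas : forall I, feasible s Pmax I -> forall m, (m <= s)%nat ->
     0 <= Iext s Pmax I m <= Pmax).
  { intros I HI m Hm.
    assert (Hc := chain (Iext s Pmax I) s (fun k Hk => HI (S k) ltac:(lia))).
    assert (Iext s Pmax I m <= Iext s Pmax I 0%nat) by (apply Hc; lia).
    assert (Iext s Pmax I s <= Iext s Pmax I m) by (apply Hc; lia).
    rewrite Iexts in * by lia. rewrite Iext0 in *. lra. }
  assert (Hrfeas : feasible s Pmax (rk h delta)).
  { intros k Hk. destruct k as [|k']; [lia|]. apply Rlt_le. apply Hr. lia. }
  split; [|split; [|split]].
  -
    split.
    + intros k Hk.
      assert (Hd := Hder (rk h delta) (fun _ => 0) k Hk (fun m Hm => proj1 (Hfeas _ Hrfeas m Hm))).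
      assert (E : - Gd h delta L k (rk h delta k) + (0 - 0) = 0)
        by (unfold Gd; rewrite Rminus_diag; unfold Rdiv; ring).
      cbv beta in Hd. rewrite E in Hd. exact Hd.
    + intros k Hk. split; [ring|split; [apply Hrfeas; auto|lra]].
  -
    intros I lam [Hst Hcs].
    assert (HIf : feasible s Pmax I) by (intros k Hk; apply Hcs; auto).
    set (X := Iext s Pmax I).
    assert (HX := Hfeas I HIf).
    assert (Hstat : forall k, (1 <= k <= s - 1)%nat -> lam k - lam (S k) = Gd h delta L k (I k)).
    { intros k Hk.
      assert (Hu := uniqueness_limite _ _ _ _ (Hst k Hk) (Hder I lam k Hk (fun m Hm => proj1 (HX m Hm)))).
      lra. }
    assert (HIk : forall k, (1 <= k <= s - 1)%nat -> X k = I k) by (intros; apply Iextk; auto).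
    assert (HXr : forall k, (1 <= k <= s - 1)%nat -> Xr k = rk h delta k) by (intros; apply Iextk; auto).
    assert (Heq : forall k, (1 <= k <= s)%nat -> 0 < lam k -> X k = X (pred k)).
    { intros k Hk Hl. destruct (Hcs k Hk) as [H1 _].
      apply Rmult_integral in H1. destruct H1 as [H1|H1]; [lra|]. fold X in H1. lra. }
    assert (Hfwd : forall d k, (k + d = s)%nat -> (1 <= k)%nat -> 0 < lam k -> X k > Xr k -> False).
    { induction d; intros k Hkd Hk1 Hl Hgt.
      - replace k with s in Hgt by lia. unfold X, Xr in Hgt. rewrite !Iexts in Hgt by lia. lra.
      - assert (Hk : (1 <= k <= s - 1)%nat) by lia.
        destruct (Hsg k (I k) Hk) as [cc [Hcc Hcc']]. rewrite <- HIk by auto. apply HX; lia.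
        rewrite HIk, HXr in Hgt by auto.
        assert (Hs1 := Hstat k Hk). rewrite Hcc' in Hs1.
        assert (cc * (rk h delta k - I k) < 0) by nra.
        assert (Hl' : 0 < lam (S k)) by lra.
        assert (He := Heq (S k) ltac:(lia) Hl'). simpl pred in He.
        assert (Hrr : Xr (S k) < Xr k) by (apply Hr; lia).
        apply (IHd (S k)); auto. lia. rewrite He, HIk, <- HXr in * by auto. lra. }
    assert (Hbwd : forall k, (1 <= k <= s)%nat -> 0 < lam k -> X (pred k) < Xr (pred k) -> False).
    { induction k as [|k' IH]; intros Hk Hl Hlt; [lia|].
      simpl pred in Hlt. destruct k' as [|k''].
      - unfold X, Xr in Hlt. rewrite !Iext0 in Hlt. lra.
      - set (k := S k'') in *. assert (Hk' : (1 <= k <= s - 1)%nat) by lia.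
        destruct (Hsg k (I k) Hk') as [cc [Hcc Hcc']]. rewrite <- HIk by auto. apply HX; lia.
        rewrite HIk, HXr in Hlt by auto.
        assert (Hs1 := Hstat k Hk'). rewrite Hcc' in Hs1.
        assert (cc * (rk h delta k - I k) > 0) by nra.
        assert (Hl' : 0 < lam k) by lra.
        assert (He := Heq k ltac:(lia) Hl').
        assert (Hrr : Xr (S (pred k)) < Xr (pred k)) by (apply Hr; unfold k; simpl; lia).
        replace (S (pred k)) with k in Hrr by (unfold k; simpl; lia).
        apply (IH ltac:(lia) Hl'). rewrite <- He. rewrite HIk, <- HXr in * by auto. lra. }
    assert (Hl0 : forall k, (1 <= k <= s)%nat -> lam k = 0).
    { intros k Hk. destruct (Hcs k Hk) as [_ [_ Hge]].
      destruct (Rle_or_lt (lam k) 0) as [Hle|Hgt]; [lra|]. exfalso.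
      assert (He := Heq k Hk Hgt).
      assert (Hrr : Xr (S (pred k)) < Xr (pred k)) by (apply Hr; lia).
      replace (S (pred k)) with k in Hrr by lia.
      destruct (Rlt_or_le (Xr k) (X k)) as [H1|H1].
      - apply (Hfwd (s - k)%nat k); auto; lia.
      - apply (Hbwd k); auto. lra. }
    split; auto.
    intros k Hk. assert (Hs1 := Hstat k Hk). rewrite !Hl0 in Hs1 by lia.
    destruct (Hsg k (I k) Hk) as [cc [Hcc Hcc']]. rewrite <- HIk by auto. apply HX; lia.
    rewrite Hcc' in Hs1.
    assert (rk h delta k - I k = 0).
    { apply (Rmult_eq_reg_l cc). lra. lra. }
    lra.
  - exact Hrfeas.
  - intros I HI.
    assert (HX := Hfeas I HI). assert (HXr' := Hfeas _ Hrfeas).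
    rewrite !fobj_dec by (try lia; intros j m Hj Hm; apply Hpos; auto; first [apply HX | apply HXr']; auto).
    assert (rsum (fun j => GF h delta L (S j) (Iext s Pmax I (S j))) (s - 1) <=
            rsum (fun j => GF h delta L (S j) (Iext s Pmax (rk h delta) (S j))) (s - 1)).
    { apply rsum_le. intros j Hj. rewrite (Iextk s Pmax (rk h delta)) by lia.
      apply G_max; auto.
      apply HD; lia. intros; apply Hh; lia. apply Hrpos; lia. apply HX; lia. }
    lra.
Qed.
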